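(* For every integer $q'\ge2$, the network $\mathcal{N}_2$ (with parameter $q'$) has no scalar linear network coding (1-dimensional VLNC) solution over any finite field.
   Context: Vector linear network coding: each source $v$ generates $x_v\in F^d$; an edge out of a source $v$ carries $Ax_v$ for a $d\times d$ matrix $A$ over $F$; an edge out of an intermediate node carries $\sum A_{e',e}y_{e'}$ over the edges $e'$ entering that node; a terminal computes vectors $\sum B_ey_e$ over its incoming edges; a $d$-dimensional VLNC solution over $F$ is such a code with which every terminal computes each demanded message for all message choices. The Char-$q$-$s$ network (integer $q\ge2$): sources $s,x_1,\dots,x_{q+2}$; intermediate nodes $m_1,\dots,m_{q+3},n_1,\dots,n_{q+3}$; terminals $r_1,\dots,r_{q+3}$; edges: $(x_1,m_i)$ for $1\le i\le q+1$; $(s,m_1)$ and $(s,m_i)$ for $4\le i\le q+3$; $(x_i,m_j)$ for $2\le i,j\le q+2$, $i\ne j$; $(x_i,m_{q+3})$ for $1\le i\le q+2$; $e_i=(m_i,n_i)$ for $1\le i\le q+3$; $(n_i,r_i)$ for $1\le i\le q+2$; $(n_{q+3},r_i)$ and $(n_i,r_{q+3})$ for $1\le i\le q+2$; $(x_i,r_1)$ for $2\le i\le q+1$; $(x_1,r_{q+2})$; $(s,r_2)$; $(s,r_3)$. Demands: $r_1$ demands $x_{q+2}$; $r_i$ demands $x_i$ for $2\le i\le q+2$; $r_{q+3}$ demands $x_1$; no terminal demands $s$. The generalized M-network $\mathcal{M}_3$: sources in three groups $G_1=(\bar a,\bar b,\bar c)$, $G_2=(\bar r,\bar s,\bar w)$,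 $G_3=(\bar x,\bar y,\bar z)$; intermediate nodes $\bar u_1,\bar u_2,\bar u_3,\bar v_1,\dots,\bar v_5$; edges from each source of $G_i$ to $\bar u_i$, edges $(\bar u_i,\bar v_i),(\bar u_i,\bar v_4),(\bar u_i,\bar v_5)$ for $i=1,2,3$, and $(\bar v_i,\bar t_j)$ for $1\le i\le5$, $1\le j\le27$; terminals $\bar t_1,\dots,\bar t_{27}$, where $\bar t_j$ demands the $j$-th triple in the lexicographic order of $G_1\times G_2\times G_3$ (e.g. $\bar t_1$: $\bar a,\bar r,\bar x$; $\bar t_2$: $\bar a,\bar r,\bar y$; $\bar t_4$: $\bar a,\bar s,\bar x$; $\bar t_{25}$: $\bar c,\bar w,\bar x$; $\bar t_{27}$: $\bar c,\bar w,\bar z$). The network $\mathcal{N}_2$ (integer $q'\ge2$) is obtained from the disjoint union of $\mathcal{M}_3$ and a copy of the Char-$q'$-$s$ network (nodes renamed $\bar m_i,\bar n_i$, terminals $\rho_i$, edges $\bar e_i=(\bar m_i,\bar n_i)$, sources $x_i$ renamed $\bar x_i$ for $2\le i\le q'+2$) by identifying $x_1$ with $\bar a$ and $s$ with $\bar x$ (so $\rho_{q'+3}$ demands $\bar a$), and adding the edges: $(\bar w,\bar t_j)$ for $j\in\{7,8,9,16,17,18\}$; $(\bar c,\bar t_j)$ for $19\le j\le24$; $(\bar a,\bar t_{25})$; $(\bar y,\bar t_{26})$; $(\bar n_1,\bar t_{25})$. All other demands are unchanged. *)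

(* Defs.v *)
From HB Require Import structures.
From mathcomp Require Import all_boot all_order all_algebra.
Set Implicit Arguments. Unset Strict Implicit. Unset Printing Implicit Defensive.
Import GRing.Theory.
Local Open Scope ring_scope.

(* A network over node type T: a list of directed edges (tail, head),        *)
(* a list of source nodes, and the demands of each node (terminals are the  *)
(* nodes with a nonempty demand list).  Edges are indexed by their position *)
(* in the edge list.                                                        *)
Record network (T : eqType) := Network {
  net_edges : seq (T * T);
  net_sources : seq T;
  net_demands : T -> seq T
}.

Section VLNC.
Variables (T : eqType) (N : network T).

Definition edge_idx := 'I_(size (net_edges N)).
Definition etail (e : edge_idx) : T := (tnth (in_tuple (net_edges N)) e).1.
Definition ehead (e : edge_idx) : T := (tnth (in_tuple (net_edges N)) e).2.
Definition in_edges (v : T) : seq edge_idx :=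
  [seq e <- enum 'I_(size (net_edges N)) | ehead e == v].

(* A d-dimensional VLNC solution over F.  A message choice is x : T -> F^d  *)
(* (only the values at sources matter).  Y e x is the vector carried by the *)
(* edge e under the message choice x:                                        *)
Definition VLNC_solution (F : fieldType) (d : nat) : Prop :=
  exists (A : edge_idx -> 'M[F]_d)
         (K : edge_idx -> edge_idx -> 'M[F]_d)
         (B : T -> T -> edge_idx -> 'M[F]_d)
         (Y : edge_idx -> (T -> 'cV[F]_d) -> 'cV[F]_d),
  [/\ forall (e : edge_idx) (x : T -> 'cV[F]_d), etail e \in net_sources N ->
        Y e x = A e *m x (etail e),
      forall (e : edge_idx) (x : T -> 'cV[F]_d), etail e \notin net_sources N ->
        Y e x = \sum_(e' <- in_edges (etail e)) K e' e *m Y e' x &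
      forall (t w : T) (x : T -> 'cV[F]_d), w \in net_demands N t ->
        \sum_(e <- in_edges t) B t w e *m Y e x = x w].

Definition scalar_linear_solution (F : fieldType) : Prop := VLNC_solution F 1.
End VLNC.

(* Nodes of the Char-q-s copy: x_1 is identified with a (nA), s with x (nX), *)
(* xbar_i (2<=i<=q+2), mbar_i, nbar_i, rho_i (1<=i<=q+3).                    *)
Inductive node :=
  | nA | nB | nC | nR | nS | nW | nX | nY | nZ
  | nU of nat | nV of nat | nT of nat
  | nXb of nat | nMb of nat | nNb of nat | nRho of nat.

Lemma node_eq_dec : forall x y : node, {x = y} + {x <> y}.
Proof. decide equality; exact: (eq_comparable _ _). Defined.

HB.instance Definition _ := comparableMixin node_eq_dec.

Definition G1 : seq node := [:: nA; nB; nC].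
Definition G2 : seq node := [:: nR; nS; nW].
Definition G3 : seq node := [:: nX; nY; nZ].

Definition triples : seq (node * (node * node)) :=
  [seq (a, rx) | a <- G1, rx <- [seq (r, x) | r <- G2, x <- G3]].

Definition demand_T (j : nat) : seq node :=
  if (1 <= j <= 27)%N then
    let p := nth (nA, (nA, nA)) triples j.-1 in [:: p.1; p.2.1; p.2.2]
  else [::].

(* Char-q-s with x_1 := a, s := x, x_i := xbar_i, m_i := mbar_i,
   n_i := nbar_i, r_i := rho_i *)
Definition char_edges (q : nat) : seq (node * node) :=
  [seq (nA, nMb i) | i <- iota 1 (q + 1)] ++
  (nX, nMb 1) :: [seq (nX, nMb i) | i <- iota 4 q] ++
  [seq (nXb ij.1, nMb ij.2)
     | ij <- [seq (i, j) | i <- iota 2 (q + 1), j <- iota 2 (q + 1)]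
     & ij.1 != ij.2] ++
  (nA, nMb (q + 3)) :: [seq (nXb i, nMb (q + 3)) | i <- iota 2 (q + 1)] ++
  [seq (nMb i, nNb i) | i <- iota 1 (q + 3)] ++
  [seq (nNb i, nRho i) | i <- iota 1 (q + 2)] ++
  [seq (nNb (q + 3), nRho i) | i <- iota 1 (q + 2)] ++
  [seq (nNb i, nRho (q + 3)) | i <- iota 1 (q + 2)] ++
  [seq (nXb i, nRho 1) | i <- iota 2 q] ++
  [:: (nA, nRho (q + 2)); (nX, nRho 2); (nX, nRho 3)].

Definition M3_edges : seq (node * node) :=
  [seq (g, nU 1) | g <- G1] ++ [seq (g, nU 2) | g <- G2] ++
  [seq (g, nU 3) | g <- G3] ++
  flatten [seq [:: (nU i, nV i); (nU i, nV 4); (nU i, nV 5)] | i <- iota 1 3] ++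
  [seq (nV i, nT j) | i <- iota 1 5, j <- iota 1 27].

Definition extra_edges : seq (node * node) :=
  [seq (nW, nT j) | j <- [:: 7; 8; 9; 16; 17; 18]%N] ++
  [seq (nC, nT j) | j <- iota 19 6] ++
  [:: (nA, nT 25); (nY, nT 26); (nNb 1, nT 25)].

Definition N2_sources (q : nat) : seq node :=
  [:: nA; nB; nC; nR; nS; nW; nX; nY; nZ] ++ [seq nXb i | i <- iota 2 (q + 1)].

Definition N2_demands (q : nat) (v : node) : seq node :=
  match v with
  | nT j => demand_T j
  | nRho i =>
      if i == 1%N then [:: nXb (q + 2)]
      else if (2 <= i <= q + 2)%N then [:: nXb i]
      else if i == (q + 3)%N then [:: nA]
      else [::]
  | _ => [::]
  end.

Definition N2 (q : nat) : network node :=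
  Network (M3_edges ++ char_edges q ++ extra_edges) (N2_sources q) (N2_demands q).

(* Main.v *)
Require Import Defs.
From mathcomp Require Import all_boot all_order all_algebra all_field.
From mathcomp Require Import ring.
Set Implicit Arguments. Unset Strict Implicit. Unset Printing Implicit Defensive.
Import GRing.Theory.
Local Open Scope ring_scope.

Definition rest (q : nat) := char_edges q ++ extra_edges.

Lemma N2_edges q : net_edges (N2 q) = M3_edges ++ rest q.
Proof. by []. Qed.

Lemma size_N2 q : size (net_edges (N2 q)) = (153 + size (rest q))%N.
Proof. by rewrite N2_edges size_cat. Qed.

Lemma size_pos q : (0 < size (net_edges (N2 q)))%N.
Proof. by rewrite size_N2. Qed.

Definition E q (i : nat) : edge_idx (N2 q) := insubd (Ordinal (size_pos q)) i.

Lemma val_E q i : (i < 153)%N -> val (E q i) = i.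
Proof. by move=> hi; rewrite /E insubdK // size_N2; exact: leq_trans hi (leq_addr _ _). Qed.

Lemma etail_E q i : (i < 153)%N -> etail (E q i) = (nth (nA,nA) M3_edges i).1.
Proof.
move=> hi; rewrite /etail (tnth_nth (nA,nA)) val_E //.
change ((nth (nA,nA) (M3_edges ++ rest q) i).1 = (nth (nA, nA) M3_edges i).1).
by rewrite nth_cat (_ : size M3_edges = 153%N) // hi.
Qed.

Definition charhead (p : node * node) :=
  match p.2 with nMb _ | nNb _ | nRho _ => true | _ => false end.

Lemma all_cons1 (a : pred (node*node)) x s : all a (x :: s) = a x && all a s.
Proof. by []. Qed.

Lemma charhead_all q : all charhead (char_edges q).
Proof.
rewrite /char_edges; rewrite !(all_cat, all_map) /=.
by repeat (first [ rewrite all_cat | rewrite all_map | rewrite all_cons1 | (apply/allP => ? _; done) | (apply/andP; split) | done ]).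
Qed.
Lemma size_M3 : size M3_edges = 153%N. Proof. by vm_compute. Qed.
Lemma nthM3 (r : seq (node*node)) i : (i < 153)%N -> nth (nA,nA) (M3_edges ++ r) i = nth (nA,nA) M3_edges i.
Proof. by move=> h; rewrite nth_cat size_M3 h. Qed.
Lemma nthR (r : seq (node*node)) i : (153 <= i)%N -> nth (nA,nA) (M3_edges ++ r) i = nth (nA,nA) r (i - 153).
Proof. by move=> h; rewrite nth_cat size_M3 ltnNge h. Qed.
Local Opaque M3_edges.

Lemma in_edges_M3 q v l :
  (forall p, charhead p -> p.2 != v) ->
  all (fun p => p.2 != v) extra_edges ->
  [seq i <- iota 0 153 | (nth (nA,nA) M3_edges i).2 == v] = l ->
  in_edges (N2 q) v = map (E q) l.
Proof.
move=> hch hex hl.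
have hmap : map val (in_edges (N2 q) v) = l.
  rewrite /in_edges.
  rewrite (eq_filter (a2 := preim val (fun i => (nth (nA,nA) (net_edges (N2 q)) i).2 == v))); last first.
    by move=> e; rewrite /ehead (tnth_nth (nA,nA)).
  rewrite -filter_map val_enum_ord size_N2 iotaD filter_cat add0n.
  change (net_edges (N2 q)) with (M3_edges ++ rest q).
  have -> : [seq i <- iota 153 (size (rest q)) | (nth (nA, nA) (M3_edges ++ rest q) i).2 == v] = [::].
    rewrite (eq_in_filter (a2 := pred0)) ?filter_pred0 // => i.
    rewrite mem_iota => /andP [h1 h2].
    rewrite nthR //.
    apply/negbTE.
    have hm : nth (nA,nA) (rest q) (i - 153) \in rest q.
      by apply: mem_nth; rewrite ltn_subLR.
    move: hm; rewrite mem_cat => /orP [hm|hm].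
      by apply: hch; move/allP: (charhead_all q); apply.
    by move/allP: hex; apply.
  rewrite cats0 -hl; apply: eq_in_filter => i; rewrite mem_iota => /andP [_ h2].
  by rewrite nthM3.
apply: (inj_map val_inj); rewrite hmap -map_comp.
rewrite -{1}(map_id l); apply/eq_in_map => i hi /=.
rewrite val_E //; move: hi; rewrite -hl mem_filter mem_iota => /andP [_ /andP [_ h]].
exact h.
Qed.

Lemma inT_ok j p : charhead p -> p.2 != nT j.
Proof. by case: p => a [] //= *; apply/eqP. Qed.
Lemma inU_ok j p : charhead p -> p.2 != nU j.
Proof. by case: p => a [] //= *; apply/eqP. Qed.
Lemma inV_ok j p : charhead p -> p.2 != nV j.
Proof. by case: p => a [] //= *; apply/eqP. Qed.

Lemma notsrc q v : (forall i, v <> nXb i) -> v \notin [:: nA; nB; nC; nR; nS; nW; nX; nY; nZ] ->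
  v \notin N2_sources q.
Proof.
move=> hx hv; rewrite mem_cat negb_or hv /=; apply/mapP => -[i _ h]; exact: (hx i h).
Qed.

Lemma src q v : v \in [:: nA; nB; nC; nR; nS; nW; nX; nY; nZ] -> v \in N2_sources q.
Proof. by move=> h; rewrite mem_cat h. Qed.

Lemma notsrc_U q k : nU k \notin N2_sources q.
Proof. by apply: notsrc => //; rewrite !inE. Qed.
Lemma notsrc_V q k : nV k \notin N2_sources q.
Proof. by apply: notsrc => //; rewrite !inE. Qed.

Section Alg.
Variable F : fieldType.

Definition pp (z om u w : F) := if z != 0 then z * u - om * w else u.
Definition rr (z : F) := if z != 0 then z else 1.

Lemma rr_neq0 z : rr z != 0.
Proof. by rewrite /rr; case: ifP => // _; exact: oner_neq0. Qed.

Lemma pair (c om z u1 u2 w1 w2 b4 b5 d : F) : z != 0 \/ om = 0 ->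
  d = c * om + (b4 * u1 + b5 * u2) -> 0 = c * z + (b4 * w1 + b5 * w2) ->
  b4 * pp z om u1 w1 + b5 * pp z om u2 w2 = rr z * d.
Proof.
move=> hz h1 h2; rewrite /pp /rr; case: ifP => hz0.
  apply/eqP; rewrite -subr_eq0 h1.
  have -> : b4 * (z * u1 - om * w1) + b5 * (z * u2 - om * w2) -
    z * (c * om + (b4 * u1 + b5 * u2)) = - om * (c * z + (b4 * w1 + b5 * w2)) by ring.
  by rewrite -h2 mulr0.
have om0 : om = 0 by case: hz => // h; rewrite h in hz0.
by rewrite h1 om0 mulr0 add0r mul1r.
Qed.

Lemma det3 (a1 a2 a3 b1 b2 b3 c1 c2 c3 d1 d2 d3 r1 r2 r3 : F) :
  r1 != 0 -> r2 != 0 -> r3 != 0 ->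
  a1 * c1 + b1 * d1 = r1 -> a1 * c2 + b1 * d2 = 0 -> a1 * c3 + b1 * d3 = 0 ->
  a2 * c1 + b2 * d1 = 0 -> a2 * c2 + b2 * d2 = r2 -> a2 * c3 + b2 * d3 = 0 ->
  a3 * c1 + b3 * d1 = 0 -> a3 * c2 + b3 * d2 = 0 -> a3 * c3 + b3 * d3 = r3 -> False.
Proof.
move=> n1 n2 n3 e11 e12 e13 e21 e22 e23 e31 e32 e33.
have h : (a1 * c1 + b1 * d1) * ((a2 * c2 + b2 * d2) * (a3 * c3 + b3 * d3) - (a2 * c3 + b2 * d3) * (a3 * c2 + b3 * d2))
  - (a1 * c2 + b1 * d2) * ((a2 * c1 + b2 * d1) * (a3 * c3 + b3 * d3) - (a2 * c3 + b2 * d3) * (a3 * c1 + b3 * d1))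
  + (a1 * c3 + b1 * d3) * ((a2 * c1 + b2 * d1) * (a3 * c2 + b3 * d2) - (a2 * c2 + b2 * d2) * (a3 * c1 + b3 * d1)) = 0 by ring.
rewrite e11 e12 e13 e21 e22 e23 e31 e32 e33 in h.
have : r1 * r2 * r3 = 0 by rewrite -h; ring.
by apply/eqP; rewrite !mulf_neq0.
Qed.
End Alg.

Definition fidx (k : nat) : nat := (6 + 3 * k)%N.

Lemma inV q k : (1 <= k <= 3)%N -> in_edges (N2 q) (nV k) = map (E q) [:: fidx k].
Proof.
case/andP; case: k => // [[|[|[|k]]]] // _ _;
  (apply: in_edges_M3; [exact: inV_ok | by vm_compute | by vm_compute]).
Qed.

Lemma tailF q k : (1 <= k <= 3)%N -> etail (E q (fidx k)) = nU k.
Proof.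
case/andP; case: k => // [[|[|[|k]]]] // _ _; by rewrite etail_E //; vm_compute.
Qed.

Section Sol.
Variables (q : nat) (F : fieldType).
Variables (A : edge_idx (N2 q) -> 'M[F]_1) (K : edge_idx (N2 q) -> edge_idx (N2 q) -> 'M[F]_1)
  (B : node -> node -> edge_idx (N2 q) -> 'M[F]_1)
  (Y : edge_idx (N2 q) -> (node -> 'cV[F]_1) -> 'cV[F]_1).
Hypothesis H1 : forall (e : edge_idx (N2 q)) (x : node -> 'cV[F]_1), etail e \in net_sources (N2 q) ->
        Y e x = A e *m x (etail e).
Hypothesis H2 : forall (e : edge_idx (N2 q)) (x : node -> 'cV[F]_1), etail e \notin net_sources (N2 q) ->
        Y e x = \sum_(e' <- in_edges (N2 q) (etail e)) K e' e *m Y e' x.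
Hypothesis H3 : forall (t w : node) (x : node -> 'cV[F]_1), w \in net_demands (N2 q) t ->
        \sum_(e <- in_edges (N2 q) t) B t w e *m Y e x = x w.

Lemma sc_mul (M N : 'M[F]_1) : (M *m N) 0 0 = M 0 0 * N 0 0.
Proof. by rewrite mxE big_ord1. Qed.

Lemma Y_int e x : etail e \notin N2_sources q ->
  Y e x 0 0 = \sum_(e' <- in_edges (N2 q) (etail e)) K e' e 0 0 * Y e' x 0 0.
Proof. by move=> h; rewrite H2 // summxE; apply: eq_bigr => *; rewrite sc_mul. Qed.

Lemma Y_src e x : etail e \in N2_sources q -> Y e x 0 0 = A e 0 0 * x (etail e) 0 0.
Proof. by move=> h; rewrite H1 // sc_mul. Qed.

Definition delta (g : node) : node -> 'cV[F]_1 := fun v => if v == g then const_mx 1 else 0.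

Lemma delta_same g : delta g g 0 0 = 1.
Proof. by rewrite /delta eqxx mxE. Qed.
Lemma delta_diff g v : v != g -> delta g v 0 0 = 0.
Proof. by move=> h; rewrite /delta (negbTE h) mxE. Qed.

Definition zeta k x := Y (E q (fidx k)) x 0 0.

Lemma zeta_zero_gen k i0 s1 s2 s3 g : (1 <= k <= 3)%N ->
  in_edges (N2 q) (nU k) = map (E q) [:: i0; i0.+1; i0.+2] ->
  etail (E q i0) = s1 -> etail (E q i0.+1) = s2 -> etail (E q i0.+2) = s3 ->
  s1 \in N2_sources q -> s2 \in N2_sources q -> s3 \in N2_sources q ->
  s1 != g -> s2 != g -> s3 != g -> zeta k (delta g) = 0.
Proof.
move=> hk hin t1 t2 t3 hs1 hs2 hs3 n1 n2 n3.
rewrite /zeta Y_int tailF // ?notsrc_U // hin big_map !big_cons big_nil.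
rewrite !Y_src ?t1 ?t2 ?t3 // !delta_diff //.
by rewrite !mulr0 !addr0.
Qed.

Lemma zeta1_zero g : g \notin G1 -> zeta 1 (delta g) = 0.
Proof.
rewrite !inE !negb_or => /and3P [n1 n2 n3].
apply: (zeta_zero_gen (i0 := 0%N) (s1 := nA) (s2 := nB) (s3 := nC)) => //.
all: first [ by apply: in_edges_M3; [exact: inU_ok | by vm_compute | by vm_compute]
           | by rewrite etail_E //; vm_compute | by apply: src | by rewrite eq_sym ].
Qed.

Lemma zeta2_zero g : g \notin G2 -> zeta 2 (delta g) = 0.
Proof.
rewrite !inE !negb_or => /and3P [n1 n2 n3].
apply: (zeta_zero_gen (i0 := 3%N) (s1 := nR) (s2 := nS) (s3 := nW)) => //.
all: first [ by apply: in_edges_M3; [exact: inU_ok | by vm_compute | by vm_compute]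
           | by rewrite etail_E //; vm_compute | by apply: src | by rewrite eq_sym ].
Qed.

Lemma zeta3_zero g : g \notin G3 -> zeta 3 (delta g) = 0.
Proof.
rewrite !inE !negb_or => /and3P [n1 n2 n3].
apply: (zeta_zero_gen (i0 := 6%N) (s1 := nX) (s2 := nY) (s3 := nZ)) => //.
all: first [ by apply: in_edges_M3; [exact: inU_ok | by vm_compute | by vm_compute]
           | by rewrite etail_E //; vm_compute | by apply: src | by rewrite eq_sym ].
Qed.

Lemma ylem k e x : (1 <= k <= 3)%N -> etail e = nV k ->
  Y e x 0 0 = K (E q (fidx k)) e 0 0 * zeta k x.
Proof.
move=> hk he; rewrite Y_int he ?notsrc_V // inV // big_map big_cons big_nil addr0.
by [].
Qed.

Lemma n12 u : u \in G1 -> u \notin G2. Proof. by rewrite !inE => /or3P [] /eqP ->. Qed.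
Lemma n13 u : u \in G1 -> u \notin G3. Proof. by rewrite !inE => /or3P [] /eqP ->. Qed.
Lemma n21 u : u \in G2 -> u \notin G1. Proof. by rewrite !inE => /or3P [] /eqP ->. Qed.
Lemma n23 u : u \in G2 -> u \notin G3. Proof. by rewrite !inE => /or3P [] /eqP ->. Qed.
Lemma n31 u : u \in G3 -> u \notin G1. Proof. by rewrite !inE => /or3P [] /eqP ->. Qed.
Lemma n32 u : u \in G3 -> u \notin G2. Proof. by rewrite !inE => /or3P [] /eqP ->. Qed.
Lemma d12 u v : u \in G1 -> v \in G2 -> u != v.
Proof. by rewrite !inE => /or3P [] /eqP -> /or3P [] /eqP ->. Qed.
Lemma d13 u v : u \in G1 -> v \in G3 -> u != v.
Proof. by rewrite !inE => /or3P [] /eqP -> /or3P [] /eqP ->. Qed.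
Lemma d23 u v : u \in G2 -> v \in G3 -> u != v.
Proof. by rewrite !inE => /or3P [] /eqP -> /or3P [] /eqP ->. Qed.

Ltac mk h g x dm zA zB := have h := dec g x dm; rewrite zA zB !mulr0 ?add0r ?addr0 in h.
Ltac mk0 h g x dm zA zB nd := have h := dec g x dm; rewrite zA zB !mulr0 ?add0r ?addr0 delta_diff in h; last by first [exact: nd | rewrite eq_sym; exact: nd].

Lemma terminal j g1 g2 g3 g1' g2' g3' :
  in_edges (N2 q) (nT j) = map (E q) [:: (17+j)%N; (44+j)%N; (71+j)%N; (98+j)%N; (125+j)%N] ->
  etail (E q (17+j)) = nV 1 -> etail (E q (44+j)) = nV 2 -> etail (E q (71+j)) = nV 3 ->
  g1 \in N2_demands q (nT j) -> g2 \in N2_demands q (nT j) -> g3 \in N2_demands q (nT j) ->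
  g1 \in G1 -> g2 \in G2 -> g3 \in G3 ->
  g1' \in G1 -> g2' \in G2 -> g3' \in G3 ->
  g1' != g1 -> g2' != g2 -> g3' != g3 ->
  zeta 1 (delta g1') != 0 \/ zeta 1 (delta g1) = 0 ->
  zeta 2 (delta g2') != 0 \/ zeta 2 (delta g2) = 0 ->
  zeta 3 (delta g3') != 0 \/ zeta 3 (delta g3) = 0 -> False.
Proof.
move=> hin t1 t2 t3 dm1 dm2 dm3 m1 m2 m3 m1' m2' m3' ne1 ne2 ne3 Q1 Q2 Q3.
have dec : forall g (x : node -> 'cV[F]_1), g \in N2_demands q (nT j) ->
  x g 0 0 = (B (nT j) g (E q (17+j)) 0 0 * K (E q (fidx 1)) (E q (17+j)) 0 0 * zeta 1 x
           + B (nT j) g (E q (44+j)) 0 0 * K (E q (fidx 2)) (E q (44+j)) 0 0 * zeta 2 x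
           + B (nT j) g (E q (71+j)) 0 0 * K (E q (fidx 3)) (E q (71+j)) 0 0 * zeta 3 x)
           + (B (nT j) g (E q (98+j)) 0 0 * Y (E q (98+j)) x 0 0
              + B (nT j) g (E q (125+j)) 0 0 * Y (E q (125+j)) x 0 0).
  move=> g x hg.
  rewrite -(H3 x hg) hin summxE big_map !big_cons big_nil addr0 !sc_mul.
  rewrite (ylem (k:=1) x isT t1) (ylem (k:=2) x isT t2) (ylem (k:=3) x isT t3).
  by rewrite !mulrA !addrA.
have z21 := zeta2_zero (n12 m1). have z31 := zeta3_zero (n13 m1).
have z21' := zeta2_zero (n12 m1'). have z31' := zeta3_zero (n13 m1').
have z12 := zeta1_zero (n21 m2). have z32 := zeta3_zero (n23 m2).
have z12' := zeta1_zero (n21 m2'). have z32' := zeta3_zero (n23 m2').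
have z13 := zeta1_zero (n31 m3). have z23 := zeta2_zero (n32 m3).
have z13' := zeta1_zero (n31 m3'). have z23' := zeta2_zero (n32 m3').
have a12 := d12 m1 m2. have a13 := d13 m1 m3. have a23 := d23 m2 m3.
have a12' := d12 m1' m2. have a13' := d13 m1' m3.
have a21' := d12 m1 m2'. have a23' := d23 m2' m3.
have a31' := d13 m1 m3'. have a32' := d23 m2 m3'.
mk h11 g1 (delta g1) dm1 z21 z31. mk0 k11 g1 (delta g1') dm1 z21' z31' ne1.
have p11 := pair Q1 h11 k11.
rewrite delta_same mulr1 in p11.
mk h12 g1 (delta g2) dm1 z12 z32. mk0 k12 g1 (delta g2') dm1 z12' z32' a21'.
have p12 := pair Q2 h12 k12.
rewrite delta_diff ?mulr0 in p12; last by first [exact: a12 | rewrite eq_sym; exact: a12].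
mk h13 g1 (delta g3) dm1 z13 z23. mk0 k13 g1 (delta g3') dm1 z13' z23' a31'.
have p13 := pair Q3 h13 k13.
rewrite delta_diff ?mulr0 in p13; last by first [exact: a13 | rewrite eq_sym; exact: a13].
mk h21 g2 (delta g1) dm2 z21 z31. mk0 k21 g2 (delta g1') dm2 z21' z31' a12'.
have p21 := pair Q1 h21 k21.
rewrite delta_diff ?mulr0 in p21; last by first [exact: a12 | rewrite eq_sym; exact: a12].
mk h22 g2 (delta g2) dm2 z12 z32. mk0 k22 g2 (delta g2') dm2 z12' z32' ne2.
have p22 := pair Q2 h22 k22.
rewrite delta_same mulr1 in p22.
mk h23 g2 (delta g3) dm2 z13 z23. mk0 k23 g2 (delta g3') dm2 z13' z23' a32'.
have p23 := pair Q3 h23 k23.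
rewrite delta_diff ?mulr0 in p23; last by first [exact: a23 | rewrite eq_sym; exact: a23].
mk h31 g3 (delta g1) dm3 z21 z31. mk0 k31 g3 (delta g1') dm3 z21' z31' a13'.
have p31 := pair Q1 h31 k31.
rewrite delta_diff ?mulr0 in p31; last by first [exact: a13 | rewrite eq_sym; exact: a13].
mk h32 g3 (delta g2) dm3 z12 z32. mk0 k32 g3 (delta g2') dm3 z12' z32' a23'.
have p32 := pair Q2 h32 k32.
rewrite delta_diff ?mulr0 in p32; last by first [exact: a23 | rewrite eq_sym; exact: a23].
mk h33 g3 (delta g3) dm3 z13 z23. mk0 k33 g3 (delta g3') dm3 z13' z23' ne3.
have p33 := pair Q3 h33 k33.
rewrite delta_same mulr1 in p33.
exact: (det3 (rr_neq0 _) (rr_neq0 _) (rr_neq0 _) p11 p12 p13 p21 p22 p23 p31 p32 p33).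
Qed.
End Sol.

Lemma choose (F : fieldType) (f : node -> F) p1 p2 : p1 != p2 ->
  exists g g', [/\ g \in [:: p1; p2], g' \in [:: p1; p2], g' != g & (f g' != 0 \/ f g = 0)].
Proof.
move=> hp; case: (f p1 =P 0) => h1.
  exists p1, p2; split; rewrite ?inE ?eqxx ?orbT //; [by rewrite eq_sym | by right].
case: (f p2 =P 0) => h2.
  exists p2, p1; split; rewrite ?inE ?eqxx ?orbT //; by left; apply/eqP.
exists p1, p2; split; rewrite ?inE ?eqxx ?orbT //; [by rewrite eq_sym | by left; apply/eqP].
Qed.

Lemma sub1 g : g \in [:: nA; nB] -> g \in G1. Proof. by rewrite !inE => /orP [] /eqP ->. Qed.
Lemma sub2 g : g \in [:: nR; nS] -> g \in G2. Proof. by rewrite !inE => /orP [] /eqP ->. Qed.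
Lemma sub3 g : g \in [:: nX; nY] -> g \in G3. Proof. by rewrite !inE => /orP [] /eqP ->. Qed.

Theorem lemma8 (q' : nat) (hq : (2 <= q')%N) (F : finFieldType) :
  ~ scalar_linear_solution (N2 q') F.
Proof.
case=> A [K [B [Y [H1 H2 H3]]]].
have [g1 [g1' [i1 i1' n1 Q1]]] := choose (fun g => zeta Y 1 (delta F g)) (p1:=nA) (p2:=nB) isT.
have [g2 [g2' [i2 i2' n2 Q2]]] := choose (fun g => zeta Y 2 (delta F g)) (p1:=nR) (p2:=nS) isT.
have [g3 [g3' [i3 i3' n3 Q3]]] := choose (fun g => zeta Y 3 (delta F g)) (p1:=nX) (p2:=nY) isT.
have m1' := sub1 i1'. have m2' := sub2 i2'. have m3' := sub3 i3'.
move: (sub1 i1) (sub2 i2) (sub3 i3) n1 n2 n3 Q1 Q2 Q3.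
move: i1 i2 i3; rewrite !inE => /orP [] /eqP -> /orP [] /eqP -> /orP [] /eqP ->.
all: move=> m1 m2 m3 n1 n2 n3 Q1 Q2 Q3.
1: apply: (@terminal _ _ _ _ _ _ H1 H2 H3 1%N _ _ _ _ _ _ _ _ _ _ _ _ _ m1 m2 m3 m1' m2' m3' n1 n2 n3 Q1 Q2 Q3);
  first [ by apply: in_edges_M3; [exact: inT_ok | by vm_compute | by vm_compute]
        | by rewrite etail_E //; vm_compute | by vm_compute ].
1: apply: (@terminal _ _ _ _ _ _ H1 H2 H3 2%N _ _ _ _ _ _ _ _ _ _ _ _ _ m1 m2 m3 m1' m2' m3' n1 n2 n3 Q1 Q2 Q3);
  first [ by apply: in_edges_M3; [exact: inT_ok | by vm_compute | by vm_compute]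
        | by rewrite etail_E //; vm_compute | by vm_compute ].
1: apply: (@terminal _ _ _ _ _ _ H1 H2 H3 4%N _ _ _ _ _ _ _ _ _ _ _ _ _ m1 m2 m3 m1' m2' m3' n1 n2 n3 Q1 Q2 Q3);
  first [ by apply: in_edges_M3; [exact: inT_ok | by vm_compute | by vm_compute]
        | by rewrite etail_E //; vm_compute | by vm_compute ].
1: apply: (@terminal _ _ _ _ _ _ H1 H2 H3 5%N _ _ _ _ _ _ _ _ _ _ _ _ _ m1 m2 m3 m1' m2' m3' n1 n2 n3 Q1 Q2 Q3);
  first [ by apply: in_edges_M3; [exact: inT_ok | by vm_compute | by vm_compute]
        | by rewrite etail_E //; vm_compute | by vm_compute ].
1: apply: (@terminal _ _ _ _ _ _ H1 H2 H3 10%N _ _ _ _ _ _ _ _ _ _ _ _ _ m1 m2 m3 m1' m2' m3' n1 n2 n3 Q1 Q2 Q3);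
  first [ by apply: in_edges_M3; [exact: inT_ok | by vm_compute | by vm_compute]
        | by rewrite etail_E //; vm_compute | by vm_compute ].
1: apply: (@terminal _ _ _ _ _ _ H1 H2 H3 11%N _ _ _ _ _ _ _ _ _ _ _ _ _ m1 m2 m3 m1' m2' m3' n1 n2 n3 Q1 Q2 Q3);
  first [ by apply: in_edges_M3; [exact: inT_ok | by vm_compute | by vm_compute]
        | by rewrite etail_E //; vm_compute | by vm_compute ].
1: apply: (@terminal _ _ _ _ _ _ H1 H2 H3 13%N _ _ _ _ _ _ _ _ _ _ _ _ _ m1 m2 m3 m1' m2' m3' n1 n2 n3 Q1 Q2 Q3);
  first [ by apply: in_edges_M3; [exact: inT_ok | by vm_compute | by vm_compute]
        | by rewrite etail_E //; vm_compute | by vm_compute ].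
1: apply: (@terminal _ _ _ _ _ _ H1 H2 H3 14%N _ _ _ _ _ _ _ _ _ _ _ _ _ m1 m2 m3 m1' m2' m3' n1 n2 n3 Q1 Q2 Q3);
  first [ by apply: in_edges_M3; [exact: inT_ok | by vm_compute | by vm_compute]
        | by rewrite etail_E //; vm_compute | by vm_compute ].
Qed.
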